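(* For all $A\in\mathrm{M}_2(E_0)$ and $B\in\mathrm{M}_2(E_1)$, \[\Big\{\tfrac12\mathrm{tr}(B)\mathrm{tr}(A)+\tfrac12\mathrm{tr}(A)\mathrm{tr}(B)-\tfrac12\mathrm{tr}(AB)-\tfrac12\mathrm{tr}(BA)\Big\}I_2-\mathrm{tr}(B)A-\mathrm{tr}(A)B+AB+BA=0.\]
   Context: $K$ is a field of characteristic zero. $E$ is the infinite-dimensional Grassmann (exterior) algebra over $K$, generated by countably many indeterminates $v_1,v_2,\dots$ subject to $v_iv_j+v_jv_i=0$ for all $i,j$. $E=E_0\oplus E_1$ is its natural $\mathbb{Z}_2$-grading: $E_0$ (resp. $E_1$) is the $K$-span of products of an even (resp. odd) number of generators; $E_0$ is commutative and central in $E$. $\mathrm{M}_n(R)$ denotes the $n\times n$ matrices over $R$, $I_2$ the $2\times2$ identity matrix, and $\mathrm{tr}$ the sum of diagonal entries. *)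

(* Defs.v *)
From HB Require Import structures.
From mathcomp Require Import all_boot all_order all_algebra.
From mathcomp Require Import finmap.
Set Implicit Arguments. Unset Strict Implicit. Unset Printing Implicit Defensive.
Import Order.TTheory GRing.Theory Num.Theory.
Local Open Scope fset_scope.
Local Open Scope ring_scope.

(* Generators are v_i, i : nat (indexed from 0 instead of 1: a relabeling).
   A basis monomial is v_{s_1} v_{s_2} ... v_{s_k} with s_1 < ... < s_k,
   encoded by the finite set S = {s_1,...,s_k}; the empty set is 1.
   An element of E is its coefficient function {fset nat} -> K, required to
   have finite support (predicate [grass_elt]). *)
Definition grass (K : fieldType) := {fset nat} -> K.

Section Grass.
Variable K : fieldType.

Definition gzero : grass K := fun _ => 0.
Definition gadd (f g : grass K) : grass K := fun S => f S + g S.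
Definition gopp (f : grass K) : grass K := fun S => - f S.
Definition gscale (c : K) (f : grass K) : grass K := fun S => c * f S.

(* number of inversions (t,u), t in T, u in U, t > u: sign of v_T v_U = ± v_(T ∪ U) *)
Definition ninv (T U : {fset nat}) : nat :=
  (\sum_(t <- enum_fset T) \sum_(u <- enum_fset U) (u < t))%N.

Definition gmul (f g : grass K) : grass K := fun S =>
  \sum_(T <- enum_fset (fpowerset S))
     (-1) ^+ ninv T (S `\` T) * (f T * g (S `\` T)).

Definition grass_elt (f : grass K) : Prop :=
  exists s : seq {fset nat}, forall S, f S != 0 -> S \in s.

(* E_0 : span of even monomials; E_1 : span of odd monomials *)
Definition grass_even (f : grass K) : Prop :=
  grass_elt f /\ forall S, odd #|` S| -> f S = 0.
Definition grass_odd (f : grass K) : Prop :=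
  grass_elt f /\ forall S, ~~ odd #|` S| -> f S = 0.

Definition gmat := 'M[grass K]_2.

Definition i0 : 'I_2 := ord0.
Definition i1 : 'I_2 := ord_max.

Definition gmat_add (A B : gmat) : gmat := \matrix_(i, j) gadd (A i j) (B i j).
Definition gmat_opp (A : gmat) : gmat := \matrix_(i, j) gopp (A i j).
Definition gmat_mul (A B : gmat) : gmat :=
  \matrix_(i, j) gadd (gmul (A i i0) (B i0 j)) (gmul (A i i1) (B i1 j)).
Definition gmat_lscale (e : grass K) (A : gmat) : gmat :=
  \matrix_(i, j) gmul e (A i j).
Definition gscalar_mx (e : grass K) : gmat :=
  \matrix_(i, j) if i == j then e else gzero.
Definition gtr (A : gmat) : grass K := gadd (A i0 i0) (A i1 i1).

End Grass.

(* Main.v *)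
Require Import Defs.
From HB Require Import structures.
From mathcomp Require Import all_boot all_order all_algebra.
From mathcomp Require Import finmap.
From mathcomp Require Import ring.
From Stdlib Require Import FunctionalExtensionality.
Import GRing.Theory.
Local Open Scope ring_scope.
Local Open Scope fset_scope.

Set Implicit Arguments.
Section L.
Variable K : fieldType.

Lemma gmulDl (f g h : grass K) : gmul (gadd f g) h = gadd (gmul f h) (gmul g h).
Proof.
apply: functional_extensionality => S; rewrite /gmul /gadd -big_split /=.
by apply: eq_bigr => T _; rewrite !mulrDl mulrDr.
Qed.

Lemma gmulDr (f g h : grass K) : gmul h (gadd f g) = gadd (gmul h f) (gmul h g).
Proof.
apply: functional_extensionality => S; rewrite /gmul /gadd -big_split /=.
by apply: eq_bigr => T _; rewrite !mulrDr.
Qed.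

Lemma ninv_sum (T U : {fset nat}) : [disjoint T & U] ->
  (ninv T U + ninv U T = #|` T| * #|` U|)%N.
Proof.
move=> dTU.
have -> : ninv U T = (\sum_(t <- enum_fset T) \sum_(u <- enum_fset U) (t < u))%N.
  by rewrite /ninv exchange_big.
rewrite /ninv -big_split /=.
rewrite -(sum1_size (enum_fset T)) big_distrl /=.
rewrite big_seq [RHS]big_seq; apply: eq_bigr => t tT.
rewrite -big_split /= -(sum1_size (enum_fset U)) big_distrr /= muln1.
rewrite big_seq [RHS]big_seq; apply: eq_bigr => u uU.
have tu : t != u.
  by apply/eqP => etu; move/fdisjointP: dTU => /(_ t tT); rewrite etu uU.
by case: (ltngtP u t) tu => // ->.
Qed.

Lemma sign_swap (T U : {fset nat}) : [disjoint T & U] -> ~~ odd #|` T| ->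
  (-1) ^+ ninv U T = (-1) ^+ ninv T U :> K.
Proof.
move=> dTU eT; rewrite -signr_odd -[RHS]signr_odd.
have := @ninv_sum T U dTU; move/(congr1 odd); rewrite oddD oddM (negbTE eT) /=.
by case: (odd (ninv T U)); case: (odd (ninv U T)).
Qed.

Lemma reindexD (S : {fset nat}) (F : {fset nat} -> K) :
  \sum_(T <- enum_fset (fpowerset S)) F T =
  \sum_(T <- enum_fset (fpowerset S)) F (S `\` T).
Proof.
rewrite -(big_map (fun T => S `\` T) xpredT).
apply: perm_big; apply: uniq_perm.
- exact: fset_uniq.
- rewrite map_inj_in_uniq ?fset_uniq // => T T' HT HT' E.
  by rewrite -(fsetDK (A:=S) (B:=T)) -?fpowersetE // E fsetDK -?fpowersetE.
move=> X; apply/idP/mapP.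
- move=> HX; exists (S `\` X); first by rewrite fpowersetE fsubsetDl.
  by rewrite fsetDK -?fpowersetE.
- by case=> Y _ ->; rewrite fpowersetE fsubsetDl.
Qed.

Lemma gmulC_even (a b : grass K) : grass_even a -> gmul b a = gmul a b.
Proof.
case=> _ ea; apply: functional_extensionality => S; rewrite /gmul reindexD.
rewrite big_seq [RHS]big_seq; apply: eq_bigr => T HT.
have sub : T `<=` S by rewrite -fpowersetE.
rewrite fsetDK //.
case: (boolP (odd #|` T|)) => oT; first by rewrite ea // !mulr0 mul0r mulr0.
rewrite sign_swap //; first by rewrite [b _ * _]mulrC.
by apply/fdisjointP => x xT; rewrite in_fsetD xT.
Qed.
End L.

Theorem corollary2p2 (K : fieldType) (charK0 : [pchar K] =i pred0)
  (A B : gmat K)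
  (hA : forall i j, grass_even (A i j))
  (hB : forall i j, grass_odd (B i j)) :
  let h := (2 : K)^-1 in
  gmat_add
    (gmat_add
      (gmat_add
        (gmat_add
          (gscalar_mx
            (gadd (gadd (gscale h (gmul (gtr B) (gtr A)))
                        (gscale h (gmul (gtr A) (gtr B))))
                  (gopp (gadd (gscale h (gtr (gmat_mul A B)))
                              (gscale h (gtr (gmat_mul B A)))))))
          (gmat_opp (gmat_lscale (gtr B) A)))
        (gmat_opp (gmat_lscale (gtr A) B)))
      (gmat_mul A B))
    (gmat_mul B A)
  = \matrix_(i, j) gzero K.
Proof.
move=> h.
have two : (2 : K) != 0 by move/pcharf0P: charK0 => ->.
have ord2 : forall i : 'I_2, i = i0 \/ i = i1.
  by case=> [[|[|//]]] Hi; [left|right]; apply: val_inj.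
have i01 : (i0 == i1) = false by [].
have i10 : (i1 == i0) = false by [].
apply/matrixP => i j; rewrite !mxE /gtr !mxE.
rewrite !(gmulDl, gmulDr).
rewrite !(gmulC_even _ (hA _ _)).
apply: functional_extensionality => S.
case: (ord2 i) => ->; case: (ord2 j) => ->; rewrite ?eqxx ?i01 ?i10 /gadd /gopp /gscale /gzero /=.
all: rewrite /h; field => //.
Qed.
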